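(* Let $V$ and $Z$ be $5$-dimensional even isotropic subspaces of $\mathbb{F}_2^{10}$. Then there exist $5$-dimensional even isotropic subspaces $V_0=V,V_1,\dots,V_n=Z$ of $\mathbb{F}_2^{10}$ and $3$-dimensional even isotropic subspaces $M_1,\dots,M_n$ of $\mathbb{F}_2^{10}$ such that $M_i\subset V_{i-1}\cap V_i$ for all $i=1,\dots,n$.
   Context: Elements of $\mathbb{F}_2^{10}$ are written $m=[\varepsilon,\delta]$ with $\varepsilon,\delta\in\mathbb{F}_2^5$; $m$ is even if $\varepsilon\cdot\delta=0\in\mathbb{F}_2$. For $m=[\varepsilon,\delta]$, $n=[\varepsilon_1,\delta_1]$ put $e(m,n)=(-1)^{\varepsilon\cdot\delta_1+\varepsilon_1\cdot\delta}$. A linear subspace $V$ is isotropic if $e(m,n)=1$ for all $m,n\in V$, and it is even isotropic if moreover all its elements are even. *)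

(* Defs.v *)
From HB Require Import structures.
From mathcomp Require Import all_boot all_order all_algebra.
Set Implicit Arguments. Unset Strict Implicit. Unset Printing Implicit Defensive.
Import GRing.Theory.
Local Open Scope ring_scope.

Definition F10 := 'rV['F_2]_(5 + 5).

Definition dot5 (a b : 'rV['F_2]_5) : 'F_2 := \sum_(i < 5) a 0 i * b 0 i.

Definition epsv (m : F10) : 'rV['F_2]_5 := lsubmx m.
Definition deltav (m : F10) : 'rV['F_2]_5 := rsubmx m.

Definition even_vec (m : F10) : Prop := dot5 (epsv m) (deltav m) = 0.

(* exponent of e(m,n) = (-1)^(eps.delta1 + eps1.delta), computed in F_2 *)
Definition e_exp (m n : F10) : 'F_2 :=
  dot5 (epsv m) (deltav n) + dot5 (epsv n) (deltav m).

Definition isotropic (V : {vspace F10}) : Prop :=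
  forall m n, m \in V -> n \in V -> e_exp m n = 0.

Definition even_isotropic (V : {vspace F10}) : Prop :=
  isotropic V /\ (forall m, m \in V -> even_vec m).

(* Main.v *)
Require Import Defs.
From HB Require Import structures.
From mathcomp Require Import all_boot all_order all_algebra.
From mathcomp Require Import ring zify.
Local Open Scope ring_scope.
Import GRing.Theory.

Lemma dotDl a b c : dot5 (a + b) c = dot5 a c + dot5 b c.
Proof. rewrite /dot5 -big_split; apply: eq_bigr => i _; by rewrite !mxE mulrDl. Qed.
Lemma dotDr a b c : dot5 c (a + b) = dot5 c a + dot5 c b.
Proof. rewrite /dot5 -big_split; apply: eq_bigr => i _; by rewrite !mxE mulrDr. Qed.
Lemma dotZl k a c : dot5 (k *: a) c = k * dot5 a c.
Proof. rewrite /dot5 mulr_sumr; apply: eq_bigr => i _; by rewrite !mxE mulrA. Qed.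
Lemma dotZr k a c : dot5 c (k *: a) = k * dot5 c a.
Proof. rewrite /dot5 mulr_sumr; apply: eq_bigr => i _; by rewrite !mxE mulrCA. Qed.

Lemma epsD a b : epsv (a + b) = epsv a + epsv b. Proof. by rewrite /epsv linearD. Qed.
Lemma epsZ k b : epsv (k *: b) = k *: epsv b. Proof. by rewrite /epsv linearZ. Qed.
Lemma delD a b : deltav (a + b) = deltav a + deltav b. Proof. by rewrite /deltav linearD. Qed.
Lemma delZ k b : deltav (k *: b) = k *: deltav b. Proof. by rewrite /deltav linearZ. Qed.

Lemma e_expC m n : e_exp m n = e_exp n m. Proof. by rewrite /e_exp addrC. Qed.
Lemma e_expDr z a b : e_exp z (a + b) = e_exp z a + e_exp z b.
Proof. rewrite /e_exp epsD delD dotDr dotDl; ring. Qed.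
Lemma e_expZr z k a : e_exp z (k *: a) = k * e_exp z a.
Proof. by rewrite /e_exp epsZ delZ dotZr dotZl mulrDr. Qed.
Lemma e_expDl z a b : e_exp (a + b) z = e_exp a z + e_exp b z.
Proof. by rewrite !(e_expC _ z) e_expDr. Qed.
Lemma e_expZl z k a : e_exp (k *: a) z = k * e_exp a z.
Proof. by rewrite !(e_expC _ z) e_expZr. Qed.

Definition qf (m : F10) := dot5 (epsv m) (deltav m).
Lemma qfD a b : qf (a + b) = qf a + qf b + e_exp a b.
Proof. rewrite /qf /e_exp epsD delD dotDr !dotDl; ring. Qed.
Lemma qfZ k a : qf (k *: a) = k * k * qf a.
Proof. by rewrite /qf epsZ delZ dotZr dotZl mulrA. Qed.

Definition ez (z : F10) (m : F10) : ('F_2)^o := e_exp z m.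
Lemma ez_lin z : linear (ez z).
Proof. move=> k a b; by rewrite /ez e_expDr e_expZr. Qed.

Lemma dim_add_line (U : {vspace F10}) v : v \notin U -> \dim (U + <[v]>) = (\dim U).+1.
Proof.
move=> vU.
have v0 : v != 0 by apply: contraNneq vU => ->; rewrite mem0v.
rewrite dimv_disjoint_sum ?dim_vline ?v0 ?addn1 //.
apply/eqP; rewrite -subv0; apply/subvP => w /memv_capP [wU /vlineP [k wk]].
rewrite memv0 wk; have [->|k0] := eqVneq k 0; first by rewrite scale0r.
exfalso; move/negP: vU; apply; have -> : v = k^-1 *: w by rewrite wk scalerA mulVf // scale1r.
by rewrite memvZ.
Qed.

Lemma exists_mid (U A : {vspace F10}) n : (U <= A)%VS -> (\dim U <= n <= \dim A)%N ->
  exists W : {vspace F10}, [/\ (U <= W)%VS, (W <= A)%VS & \dim W = n].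
Proof.
move: {2}(n - \dim U)%N (erefl (n - \dim U)%N) => k; elim: k U => [|k IH] U Hk UA /andP [Un nA].
  exists U; split => //; apply/eqP; rewrite eqn_leq Un /=; by rewrite -subn_eq0 Hk.
have nA' : ~~ (A <= U)%VS.
  apply/negP => AU; have := dimvS AU; have : (\dim U < n)%N by rewrite -subn_gt0 Hk.
  move=> h1 h2; have := leq_trans nA h2; by rewrite leqNgt h1.
case/subvPn: nA' => a aA aU.
have dU := dim_add_line U a aU.
have e1 : (n - \dim (U + <[a]>))%N = k by rewrite dU subnS Hk.
have e2 : (U + <[a]> <= A)%VS by rewrite subv_add UA -memvE.
have e3 : (\dim (U + <[a]>) <= n <= \dim A)%N by rewrite dU nA andbT -subn_gt0 Hk.
have [W [h1 h2 h3]] := IH (U + <[a]>)%VS e1 e2 e3.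
exists W; split => //; exact: subv_trans (addvSl _ _) h1.
Qed.

Lemma ei_sub (M W : {vspace F10}) : (M <= W)%VS -> even_isotropic W -> even_isotropic M.
Proof.
move=> /subvP MW [h1 h2]; split; last by move=> m /MW; apply: h2.
by move=> m n /MW mW /MW nW; apply: h1.
Qed.

Lemma step (V Z : {vspace F10}) : \dim V = 5%N -> \dim Z = 5%N ->
  even_isotropic V -> even_isotropic Z -> V != Z ->
  exists W M : {vspace F10}, [/\ \dim W = 5%N, even_isotropic W, \dim M = 3%N,
     (M <= V :&: W)%VS & (\dim (V :&: Z) < \dim (W :&: Z))%N].
Proof.
move=> dV dZ eV eZ VZ.
have nZV : ~~ (Z <= V)%VS.
  apply/negP => ZV; move/negP: VZ; apply; rewrite eq_sym eqEdim ZV dV dZ //.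
case/subvPn: nZV => z zZ zV.
pose fL : {linear F10 -> ('F_2)^o} := HB.pack (ez z) (GRing.isLinear.Build _ _ _ _ (ez z) (ez_lin z)).
pose f := linfun fL.
have fE m : f m = e_exp z m by rewrite lfunE.
clearbody f; clear fL.
pose A := (V :&: lker f)%VS.
have dA : (4 <= \dim A)%N.
  have := limg_ker_dim f V; rewrite dV => h.
  have e1 : \dim (fullv : {vspace ('F_2)^o}) = 1%N by rewrite dimvf.
  have : (\dim (f @: V) <= 1)%N by rewrite -[X in (_ <= X)%N]e1; apply: dimvS; apply: subvf.
  rewrite /A => h3; rewrite -(leq_add2r (\dim (f @: V))) h; exact: leq_add (leqnn 4) h3.
have zVZ : z \notin (V :&: Z)%VS by apply: contra zV => /memv_capP [].
have dVZ := dim_add_line _ _ zVZ.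
have VZZ : ((V :&: Z) + <[z]> <= Z)%VS by rewrite subv_add capvSr -memvE.
have dVZ4 : (\dim (V :&: Z) <= 4)%N by have := dimvS VZZ; rewrite dVZ dZ.
have VZA : (V :&: Z <= A)%VS.
  apply/subvP => w /memv_capP [wV wZ]; apply/memv_capP; split => //.
  by rewrite memv_ker fE (proj1 eZ).
have [A' [h1 h2 h3]] := exists_mid (V :&: Z)%VS A 4 VZA (introT andP (conj dVZ4 dA)).
have A'V : (A' <= V)%VS by apply: subv_trans h2 (capvSl _ _).
have zA' : z \notin A' by apply: contra zV; apply/subvP.
pose W := (A' + <[z]>)%VS.
have dW : \dim W = 5%N by rewrite /W dim_add_line // h3.
have d3 : (\dim (0%VS : {vspace F10}) <= 3 <= \dim A')%N by rewrite dimv0 h3.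
have [M [_ h5 h6]] := exists_mid 0%VS A' 3 (sub0v _) d3.
exists W, M; split => //.
- have Wdec : forall w, w \in W -> exists a k, [/\ a \in V, e_exp z a = 0 & w = a + k *: z].
    move=> w /memv_addP [a aA [b /vlineP [k ->] ->]]; exists a, k; split.
    + by move/subvP: A'V; apply.
    + have /subvP := h2; move/(_ a aA)/memv_capP => [_]; by rewrite memv_ker fE => /eqP.
    + done.
  have zz : e_exp z z = 0 by apply: (proj1 eZ).
  have qz : qf z = 0 by apply: (proj2 eZ).
  split.
  + move=> m n /Wdec [a [k [aV az ->]]] /Wdec [b [l [bV bz ->]]].
    rewrite !e_expDl !e_expDr !e_expZl !e_expZr (proj1 eV a b aV bV) (e_expC a z) az bz zz.
    by rewrite !mulr0 !addr0.
  + move=> m /Wdec [a [k [aV az ->]]]; rewrite /even_vec -/(qf _) qfD qfZ e_expZr (e_expC a z) az qz.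
    have qa : qf a = 0 by apply: (proj2 eV).
    by rewrite qa !mulr0 !addr0.
- rewrite subv_cap (subv_trans h5 A'V) /=; exact: subv_trans h5 (addvSl _ _).
- rewrite -ltnS -dVZ; apply: leq_trans (dimvS _) => //.
  rewrite subv_cap VZZ andbT /W; apply: addvS => //; exact: subvv.
Qed.

Lemma base (Z : {vspace F10}) : \dim Z = 5%N -> even_isotropic Z ->
  exists (n : nat) (Vs Ms : nat -> {vspace F10}),
    [/\ Vs 0%N = Z, Vs n = Z,
        (forall i, (i <= n)%N -> \dim (Vs i) = 5%N /\ even_isotropic (Vs i)) &
        (forall i, (1 <= i <= n)%N ->
           [/\ \dim (Ms i) = 3%N, even_isotropic (Ms i)
             & (Ms i <= Vs i.-1 :&: Vs i)%VS])].
Proof.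
move=> dZ eZ; exists 0%N, (fun _ => Z), (fun _ => Z); split => //.
by case=> [|i]; rewrite ?andbF.
Qed.

Lemma chain (Z : {vspace F10}) : \dim Z = 5%N -> even_isotropic Z -> forall m (V : {vspace F10}),
  \dim V = 5%N -> even_isotropic V -> (5 - \dim (V :&: Z) <= m)%N ->
  exists (n : nat) (Vs Ms : nat -> {vspace F10}),
    [/\ Vs 0%N = V, Vs n = Z,
        (forall i, (i <= n)%N -> \dim (Vs i) = 5%N /\ even_isotropic (Vs i)) &
        (forall i, (1 <= i <= n)%N ->
           [/\ \dim (Ms i) = 3%N, even_isotropic (Ms i)
             & (Ms i <= Vs i.-1 :&: Vs i)%VS])].
Proof.
move=> dZ eZ; elim=> [|m IH] V dV eV hm; (have [->|VZ] := eqVneq V Z;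
  first by apply: base);
  have [W [M [dW eW dM MVW lt]]] := step V Z dV dZ eV eZ VZ;
  have WZ5 : (\dim (W :&: Z) <= 5)%N by rewrite -[X in (_ <= X)%N]dZ; apply: dimvS; apply: capvSr.
- exfalso; move: hm; rewrite leqn0 subn_eq0 leqNgt; move/negP; apply; exact: leq_trans lt WZ5.
- have hW : (5 - \dim (W :&: Z) <= m)%N.
    rewrite -ltnS; apply: leq_trans hm; apply: ltn_sub2l => //.
    exact: leq_trans lt WZ5.
  have [n [Vs [Ms [h0 hn hV hM]]]] := IH W dW eW hW.
  exists n.+1, (fun i => if i is i'.+1 then Vs i' else V), (fun i => if i == 1%N then M else Ms i.-1).
  split => //.
  + case=> [|i] /=; first by split.
    by rewrite ltnS => /hV.
  + case=> [//|[|i]] /=.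
    * move=> _; split => //; first exact: ei_sub _ _ (subv_trans MVW (capvSl _ _)) eV.
      by rewrite h0.
    * move=> h; exact: (hM i.+1 h).
Qed.

Theorem mainTheorem5 (V Z : {vspace F10}) :
  \dim V = 5%N -> \dim Z = 5%N -> even_isotropic V -> even_isotropic Z ->
  exists (n : nat) (Vs Ms : nat -> {vspace F10}),
    [/\ Vs 0%N = V, Vs n = Z,
        (forall i, (i <= n)%N -> \dim (Vs i) = 5%N /\ even_isotropic (Vs i)) &
        (forall i, (1 <= i <= n)%N ->
           [/\ \dim (Ms i) = 3%N, even_isotropic (Ms i)
             & (Ms i <= Vs i.-1 :&: Vs i)%VS])].
Proof.
move=> dV dZ eV eZ; exact: (chain Z dZ eZ _ V dV eV (leqnn _)).
Qed.
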